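(* Let $m$ be a positive integer and $G$ a finite soluble group such that $|\mathscr R(g)|\le m$ for all $g\in G$. Then the exponent of $G/F(G)$ divides $m!$, where $F(G)$ is the Fitting subgroup of $G$.
   Context: Commutators: $a^b=b^{-1}ab$, $[a,b]=a^{-1}b^{-1}ab$, and $[a,{}_nb]=[\dots[[a,b],b],\dots,b]$ with $b$ repeated $n$ times. For $g$ in a finite group $G$, the right Engel sink $\mathscr R(g)$ is the smallest set $\mathscr R\subseteq G$ such that for every $x\in G$ there is $r(x)\ge1$ with $[g,{}_nx]\in\mathscr R$ for all $n\ge r(x)$. $F(G)$ is the largest nilpotent normal subgroup of $G$. *)

(* Defs.v *)
From HB Require Import structures.
From mathcomp Require Import all_boot all_fingroup all_solvable.
Set Implicit Arguments.
Unset Strict Implicit.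
Unset Printing Implicit Defensive.
Local Open Scope group_scope.

(* Iterated commutator [g, _n x] = [...[[g,x],x],...,x] (x repeated n times).
   MathComp's [~ a, b] is a^-1 * a ^ b = a^-1 b^-1 a b. *)
Definition itcomm (gT : finGroupType) (g x : gT) (n : nat) : gT :=
  iter n (fun y => [~ y, x]) g.

Definition is_right_sink (gT : finGroupType) (G : {set gT}) (g : gT)
    (R : {set gT}) : Prop :=
  forall x, x \in G -> exists2 r : nat, (1 <= r)%N &
    forall n : nat, (r <= n)%N -> itcomm g x n \in R.

Definition is_smallest_right_sink (gT : finGroupType) (G : {set gT}) (g : gT)
    (R : {set gT}) : Prop :=
  is_right_sink G g R /\
  forall R' : {set gT}, is_right_sink G g R' -> R \subset R'.

(* Main.v *)
Require Import Defs.
From HB Require Import structures.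
From mathcomp Require Import all_boot all_fingroup all_solvable.
From Stdlib Require Import Classical ClassicalEpsilon.
Local Open Scope group_scope.
Set Implicit Arguments.
Unset Strict Implicit.

Definition asb (P : Prop) : bool := if excluded_middle_informative P then true else false.
Lemma asbP (P : Prop) : reflect P (asb P).
Proof. rewrite /asb; case: excluded_middle_informative => h; constructor; done. Qed.

Lemma smallest_sink_exists (gT : finGroupType) (G : {set gT}) (g : gT) :
  exists R, is_smallest_right_sink G g R.
Proof.
pose rec y := exists2 x, x \in G & forall r, exists2 n, (r <= n)%N & itcomm g x n = y.
exists [set y | asb (rec y)]; split.
  move=> x Gx.
  have H : forall s : seq gT, exists r, forall y, y \in s ->
      rec y \/ forall n, (r <= n)%N -> itcomm g x n <> y.
    elim=> [|y s [r0 IH]]; first by exists 0%N.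
    have [ry|nry] := classic (rec y).
      exists r0 => z; rewrite inE => /orP[/eqP->|zs]; first by left.
      exact: IH.
    have [r1 Hr1] : exists r1, forall n, (r1 <= n)%N -> itcomm g x n <> y.
      apply: NNPP => hn; apply: nry; exists x => // r.
      apply: NNPP => hr; apply: hn; exists r => n rn e; apply: hr; by exists n.
    exists (maxn r0 r1) => z; rewrite inE => /orP[/eqP->|zs].
      by right=> n; rewrite geq_max => /andP[_]; apply: Hr1.
    case: (IH z zs) => [?|h]; [by left|right=> n; rewrite geq_max => /andP[? _]; exact: h].
  have [r Hr] := H (enum gT).
  exists (maxn 1 r); first by rewrite leq_maxl.
  move=> n; rewrite geq_max => /andP[_ rn]; rewrite inE; apply/asbP.
  by case: (Hr (itcomm g x n) (mem_enum _ _)) => // /(_ n rn).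
move=> R' sR'; apply/subsetP=> y; rewrite inE => /asbP[x Gx Hx].
have [r _ Hr] := sR' x Gx.
by have [n rn <-] := Hx r; apply: Hr.
Qed.
Lemma itcommS (gT : finGroupType) (g x : gT) n : itcomm g x n.+1 = [~ itcomm g x n, x].
Proof. by []. Qed.

Lemma periodic_comm (gT : finGroupType) (N : {group gT}) (z a : gT) :
  abelian N -> z \in 'N(N) -> coprime #|N| #[z] -> a \in N ->
  exists2 k, (0 < k)%N & itcomm [~ a, z] z k = [~ a, z].
Proof.
move=> abN nNz co aN.
have nNZ : <[z]> \subset 'N(N) by rewrite cycle_subG.
set B := [~: N, <[z]>].
have sBN : B \subset N by rewrite commg_subl.
have inB : forall b, b \in N -> [~ b, z] \in B.
  by move=> b bN; apply: mem_commg => //; apply: cycle_id.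
have itB : forall n u, u \in B -> itcomm u z n \in B.
  elim=> [|n IH] u uB //; rewrite itcommS; apply: inB; apply: (subsetP sBN); exact: IH.
have TI := coprime_abel_cent_TI nNZ co abN.
have inj : forall b c, b \in B -> c \in B -> [~ b, z] = [~ c, z] -> b = c.
  move=> b c bB cB e.
  have wz : (c * b^-1) ^ z = c * b^-1.
    by rewrite conjMg conjVg !conjg_mulR e invMg mulgA mulgK.
  have : c * b^-1 \in 'C_B(<[z]>).
    rewrite inE groupM ?groupV //= cent_cycle; apply/cent1P.
    by apply/commgP; apply/conjg_fixP.
  rewrite TI inE => /eqP h; by apply/eqP; rewrite eq_sym eq_mulgV1 h.
have canc : forall i v w, v \in B -> w \in B -> itcomm v z i = itcomm w z i -> v = w.
  elim=> [|i IH] v w vB wB //= e.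
  apply: IH => //; apply: inj; try apply: itB => //; exact: e.
set u := [~ a, z].
have uB : u \in B by apply: inB.
pose f := fun i : 'I_(#|gT|.+1) => itcomm u z i.
have : ~~ injectiveb f.
  apply/injectiveP => injf; have := leq_card f injf; by rewrite card_ord ltnn.
case/injectivePn=> i [j ij fij].
wlog lt_ij : i j ij fij / (i < j)%N.
  move=> W; case: (ltngtP i j) => h; first exact: (W i j).
    by apply: (W j i) => //; rewrite eq_sym.
  by move: ij; rewrite (val_inj h) eqxx.
exists (j - i)%N; first by rewrite subn_gt0.
symmetry; apply: (canc i) => //; first exact: itB.
rewrite /itcomm -iterD subnKC ?(ltnW lt_ij) //; exact: fij.
Qed.

Lemma sink_mem (gT : finGroupType) (G R : {set gT}) (g z : gT) :
  is_right_sink G g R -> z \in G ->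
  (exists2 k, (0 < k)%N & itcomm [~ g, z] z k = [~ g, z]) -> [~ g, z] \in R.
Proof.
move=> sR Gz [k k0 hk]; have [r r1 Hr] := sR z Gz.
have per : forall t, itcomm [~ g, z] z (k * t) = [~ g, z].
  elim=> [|t IH]; first by rewrite muln0.
  have E : itcomm [~ g, z] z (k + k * t) = itcomm (itcomm [~ g, z] z (k * t)) z k.
    exact: iterD.
  by rewrite mulnS E IH.
have e : itcomm g z (k * r).+1 = [~ g, z].
  have E : itcomm g z (k * r).+1 = itcomm [~ g, z] z (k * r) by exact: iterSr.
  by rewrite E per.
rewrite -e; apply: Hr; apply: leqW; by rewrite leq_pmull.
Qed.

Lemma abel_core (gT : finGroupType) (G N : {group gT}) (x : gT) (m : nat) :
  N <| G -> abelian N -> x \in G -> coprime #|N| #[x] ->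
  (forall g, g \in G -> exists2 R : {set gT}, is_right_sink G g R & (#|R| <= m)%N) ->
  forall a, a \in N -> a ^ (x ^+ m`!) = a.
Proof.
move=> nsNG abN Gx co SC a aN.
have Ga : a \in G by apply: (subsetP (normal_sub nsNG)).
have [R sR cR] := SC a Ga.
pose f := fun j : 'I_m.+1 => [~ a, x ^+ j].
have fR : forall j, f j \in R.
  move=> j; apply: sink_mem sR (groupX _ Gx) _.
  apply: periodic_comm abN _ _ aN.
    exact: (subsetP (normal_norm nsNG)) (groupX _ Gx).
  apply: coprime_dvdr co; exact: orderXdvd.
have : ~~ injectiveb f.
  apply/injectiveP => injf.
  have := card_imset [set: 'I_m.+1] injf; rewrite cardsT card_ord => e.
  have : #|f @: [set: 'I_m.+1]| <= #|R| by apply: subset_leq_card; apply/subsetP=> y /imsetP[j _ ->].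
  by rewrite e => h; have := leq_trans h cR; rewrite ltnn.
case/injectivePn=> i [j ij fij].
wlog lt_ij : i j ij fij / (i < j)%N.
  move=> W; case: (ltngtP i j) => h; first exact: (W i j).
    by apply: (W j i) => //; rewrite eq_sym.
  by move: ij; rewrite (val_inj h) eqxx.
have e1 : a ^ (x ^+ i) = a ^ (x ^+ j) by move: fij; rewrite /f !commgEl => /mulgI.
have e2 : a ^ (x ^+ (j - i)) = a.
  apply: (@conjg_inj _ (x ^+ i)); by rewrite -conjgM -expgD subnK ?(ltnW lt_ij) // e1.
have : (j - i %| m`!)%N.
  apply: dvdn_fact; rewrite subn_gt0 lt_ij /=; apply: leq_trans (leq_subr _ _) _.
  by rewrite -ltnS.
case/dvdnP=> e ->; rewrite mulnC expgM.
have c : commute a (x ^+ (j - i)) by apply/commgP; apply/conjg_fixP.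
have c2 := commuteX e c.
by apply/conjg_fixP; apply/commgP.
Qed.

Definition SC (gT : finGroupType) (G : {set gT}) (m : nat) :=
  forall g, g \in G -> exists2 R : {set gT}, is_right_sink G g R & (#|R| <= m)%N.

Lemma itcomm_coset (gT : finGroupType) (N : {group gT}) (g x : gT) n :
  g \in 'N(N) -> x \in 'N(N) ->
  itcomm g x n \in 'N(N) /\ coset N (itcomm g x n) = itcomm (coset N g) (coset N x) n.
Proof.
move=> Ng Nx; elim: n => [|n [IH1 IH2]] //.
rewrite !itcommS; split; first exact: groupR.
by rewrite -IH2; apply: morphR.
Qed.

Lemma SC_quo (gT : finGroupType) (G N : {group gT}) m :
  N <| G -> SC G m -> SC (G / N) m.
Proof.
move=> nsNG SCG gq /morphimP[g Ng Gg ->].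
have [R sR cR] := SCG g Gg.
exists (coset N @: R); last exact: leq_trans (leq_imset_card _ _) cR.
move=> xq /morphimP[x Nx Gx ->].
have [r r1 Hr] := sR x Gx; exists r => // n rn.
have [_ <-] := itcomm_coset n Ng Nx.
by apply: imset_f; apply: Hr.
Qed.

Lemma core (n : nat) : forall (gT : finGroupType) (G : {group gT}) (m q : nat) (x : gT),
  (#|G| <= n)%N -> solvable G -> SC G m -> x \in G -> q.-elt x -> x ^+ m`! \in 'O_q(G).
Proof.
elim: n => [|n IHn] gT G m q x cG solG SCG Gx qx.
  by move: (cardG_gt0 G); rewrite leqn0 in cG; rewrite (eqP cG).
case: (eqVneq G 1%G) => [G1|ntG].
  by move: Gx; rewrite G1 inE => /eqP->; rewrite expg1n group1.
have [N minN sNG] := minnormal_exists ntG (normG G).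
have [nNG ntN abelN] := minnormal_solvable minN sNG solG.
have nsNG : N <| G by rewrite /normal sNG nNG.
set p := pdiv #|N| in abelN.
have pN : p.-group N := abelem_pgroup abelN.
have abN : abelian N := abelem_abelian abelN.
have ltG : (#|G / N| <= n)%N.
  by rewrite -ltnS; apply: leq_trans (ltn_quotient ntN sNG) cG.
have Nx : x \in 'N(N) := subsetP nNG x Gx.
have := IHn _ (G / N)%G m q (coset N x) ltG (quotient_sol N solG) (SC_quo nsNG SCG)
   (mem_quotient N Gx) (morph_p_elt (coset_morphism N) Nx qx).
rewrite -morphX // => yq.
set y := x ^+ m`!.
have Ny : y \in 'N(N) by apply: groupX.
set L := coset N @*^-1 'O_q(G / N).
have yL : y \in L by apply: mem_morphpre.
have nsLG : L <| G by rewrite -(quotientGK nsNG) cosetpre_normal pcore_normal.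
have sNL : N \subset L by rewrite -{1}(ker_coset N); apply: ker_sub_pre.
have nNL : L \subset 'N(N) by apply: morphpre_sub.
have qLN : q.-group (L / N) by rewrite cosetpreK pcore_pgroup.
case: (eqVneq p q) => [epq|npq].
  have qL : q.-group L.
    have e := card_quotient nNL.
    rewrite /pgroup -(Lagrange sNL) pnatM -e -epq; apply/andP; split; first exact: pN.
    rewrite epq; exact: qLN.
  exact: (subsetP (pcore_max qL nsLG)).
have co : coprime #|N| #[x].
  apply: (@pnat_coprime p) => //; apply: sub_in_pnat qx => r _.
  by rewrite !inE => /eqP->; rewrite eq_sym.
have cyN : y \in 'C(N).
  apply/centP => a aN; apply: commute_sym; apply/commgP; apply/conjg_fixP.
  exact: (abel_core nsNG abN Gx co SCG).
set C := 'C_L(N).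
have yC : y \in C by rewrite inE yL cyN.
have nsCG : C <| G.
  rewrite /normal (subset_trans (subsetIl _ _) (normal_sub nsLG)) /=.
  apply: normsI; first exact: normal_norm.
  exact: subset_trans nNG (cent_norm N).
have sNZ : N \subset 'Z(C).
  have sNC : N \subset C by apply/subsetIP; split; [exact: sNL | exact: abN].
  apply/subsetIP; split; first exact: sNC.
  rewrite centsC; exact: subsetIr.
have nilC : nilpotent C.
  rewrite -quotient_center_nil; apply: (pgroup_nil (p:=q)).
  rewrite /pgroup card_quotient ?normal_norm ?center_normal //.
  apply: pnat_dvd (indexgS C sNZ) _.
  rewrite -card_quotient; last exact: subset_trans (subsetIl _ _) nNL.
  apply: pgroupS qLN; apply: quotientS; exact: subsetIl.
have yOC : y \in 'O_q(C).
  rewrite (mem_normal_Hall (nilpotent_pcore_Hall q nilC) (pcore_normal q C) yC).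
  exact: p_eltX.
apply: (subsetP (pcore_max (pcore_pgroup q C) (char_normal_trans (pcore_char q C) nsCG))).
exact: yOC.
Qed.

Unset Implicit Arguments.
Theorem lemma3p6 (gT : finGroupType) (G : {group gT}) (m : nat) :
  (0 < m)%N -> solvable G ->
  (forall g, g \in G -> forall R : {set gT},
      is_smallest_right_sink G g R -> (#|R| <= m)%N) ->
  (exponent (G / 'F(G)) %| m`!)%N.
Proof.
move=> m0 solG HR.
have SCG : SC G m.
  move=> g Gg; have [R sm] := smallest_sink_exists G g.
  by exists R; [exact: sm.1 | exact: HR g Gg R sm].
apply/exponentP => _ /morphimP[x Nx Gx ->].
rewrite -morphX //.
set w := coset 'F(G) (x ^+ m`!).
have NX : x ^+ m`! \in 'N('F(G)) by apply: groupX.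
have wq : forall q : nat, w.`_q = 1.
  move=> q; rewrite /w -morph_constt // consttX; apply: coset_id.
  have sOF : 'O_q(G) \subset 'F(G).
    by apply: Fitting_max; [exact: pcore_normal | exact: pgroup_nil (pcore_pgroup q G)].
  apply: (subsetP sOF); apply: (core (leqnn _) solG SCG).
    by apply: (subsetP _ _ (cycle_constt q x)); rewrite cycle_subG.
  exact: p_elt_constt.
apply/eqP; rewrite -order_eq1.
case: (ltngtP #[w] 1) => [|gt1|//].
  by rewrite ltnS leqn0 => /eqP h; have := order_gt0 w; rewrite h.
have := wq (pdiv #[w]); move/constt1P => h.
have := pnatPpi h (p:=pdiv #[w]); rewrite pi_pdiv gt1 => /(_ isT).
by rewrite !inE eqxx.
Qed.
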